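(* Let $\mathcal{E}\subseteq \mathrm{CL}(\mathbb{R})$. The following conditions are equivalent: (1) there exists $\mathcal{G}\subseteq C(\mathbb{R},\mathbb{R})$ such that $\mathcal{E}\in \mathcal{K}_\mathcal{G}$; (2) $\mathcal{E}$ is hereditary.
   Context: $\mathrm{CL}(\mathbb{R})$ denotes the family of all closed subsets of $\mathbb{R}$ and $C(\mathbb{R},\mathbb{R})$ the set of all continuous functions $\mathbb{R}\to\mathbb{R}$. For $\mathcal{G}\subseteq C(\mathbb{R},\mathbb{R})$ let $R_\mathcal{G}=\{(f,E)\in C(\mathbb{R},\mathbb{R})\times\mathrm{CL}(\mathbb{R}):(\exists g\in\mathcal{G})\, f\restriction E=g\restriction E\}$. For $\mathcal{F}\subseteq C(\mathbb{R},\mathbb{R})$ and $\mathcal{E}\subseteq\mathrm{CL}(\mathbb{R})$ put $E_\mathcal{G}(\mathcal{F})=\{E\in\mathrm{CL}(\mathbb{R}):(\forall f\in\mathcal{F})\,(f,E)\in R_\mathcal{G}\}$ and $F_\mathcal{G}(\mathcal{E})=\{f\in C(\mathbb{R},\mathbb{R}):(\forall E\in\mathcal{E})\,(f,E)\in R_\mathcal{G}\}$. Let $\mathcal{K}_\mathcal{G}=\{E_\mathcal{G}(\mathcal{F}):\mathcal{F}\subseteq C(\mathbb{R},\mathbb{R})\}$ (equivalently, the families $\mathcal{E}$ with $E_\mathcal{G}(F_\mathcal{G}(\mathcal{E}))=\mathcal{E}$). A family $\mathcal{E}\subseteq\mathrm{CL}(\mathbb{R})$ is hereditary if for all $D,E\in\mathrm{CL}(\mathbb{R})$,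 $D\subseteq E\in\mathcal{E}$ implies $D\in\mathcal{E}$. *)

(* Defs.v *)
From Stdlib Require Export Reals.
Open Scope R_scope.

Definition CL (E : R -> Prop) : Prop := closed_set E.

Definition Cont (f : R -> R) : Prop := continuity f.

Definition R_G (G : (R -> R) -> Prop) (f : R -> R) (E : R -> Prop) : Prop :=
  exists g, G g /\ forall x, E x -> f x = g x.

Definition E_G (G : (R -> R) -> Prop) (F : (R -> R) -> Prop) : (R -> Prop) -> Prop :=
  fun E => CL E /\ forall f, F f -> R_G G f E.

Definition F_G (G : (R -> R) -> Prop) (Es : (R -> Prop) -> Prop) : (R -> R) -> Prop :=
  fun f => Cont f /\ forall E, Es E -> R_G G f E.

(* Es belongs to K_G : Es = E_G(F) for some F ⊆ C(R,R) (equality of families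
   taken extensionally). *)
Definition in_K_G (G : (R -> R) -> Prop) (Es : (R -> Prop) -> Prop) : Prop :=
  exists F : (R -> R) -> Prop, (forall f, F f -> Cont f) /\
    forall E, Es E <-> E_G G F E.

Definition hereditary (Es : (R -> Prop) -> Prop) : Prop :=
  forall D E : R -> Prop, CL D -> CL E -> (forall x, D x -> E x) -> Es E -> Es D.

(* Main.v *)
Require Import Defs.
From Stdlib Require Import Reals Lra Classical.
Open Scope R_scope.

Lemma zero_set_exists (E : R -> Prop) : closed_set E ->
  exists g : R -> R, continuity g /\ forall x, g x = 0 <-> E x.
Proof.
  intros HE.
  destruct (classic (exists y, E y)) as [[y0 Hy0] | Hne].
  2:{ exists (fun _ => 1). split.
      - intros x. apply continuity_const. intros a b; reflexivity.
      - intros x; split; intros H. lra. exfalso; apply Hne; eauto. }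
  set (S := fun x r => exists y, E y /\ r = - Rabs (x - y)).
  assert (bnd : forall x, bound (S x)).
  { intros x. exists 0. intros r [y [_ ->]]. pose proof (Rabs_pos (x - y)); lra. }
  assert (ne : forall x, exists r, S x r).
  { intros x. exists (- Rabs (x - y0)). exists y0; auto. }
  set (m := fun x => proj1_sig (completeness (S x) (bnd x) (ne x))).
  assert (Hm : forall x, is_lub (S x) (m x)).
  { intros x. unfold m. destruct (completeness (S x) (bnd x) (ne x)); auto. }
  assert (Lip : forall x x', m x' <= m x + Rabs (x - x')).
  { intros x x'. destruct (Hm x') as [_ H2]. apply H2.
    intros r [y [Ey ->]]. destruct (Hm x) as [H1 _].
    assert (S x (- Rabs (x - y))) by (exists y; auto).
    apply H1 in H.
    pose proof (Rabs_triang (x - x') (x' - y)).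
    replace (x - x' + (x' - y)) with (x - y) in H0 by ring. lra. }
  exists (fun x => - m x). split.
  - intros x eps Heps. exists eps. split; [exact Heps|].
    intros y [_ Hy]. unfold R_dist in *. simpl in *. unfold R_dist in *.
    pose proof (Lip x y). pose proof (Lip y x).
    rewrite Rabs_minus_sym in H0.
    apply Rabs_def1; [|]; rewrite Rabs_minus_sym in Hy; lra.
  - intros x; split; intros H.
    + apply NNPP. intros nEx.
      destruct (HE x nEx) as [delta Hd].
      assert (m x <= - delta).
      { destruct (Hm x) as [_ H2]. apply H2. intros r [y [Ey ->]].
        destruct (Rle_or_lt delta (Rabs (x - y))) as [h|h]. lra.
        exfalso. apply (Hd y). unfold disc. rewrite Rabs_minus_sym. exact h. exact Ey. }
      destruct delta as [d dpos]; simpl in *. lra.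
    + destruct (Hm x) as [H1 H2].
      assert (S x 0). { exists x. split; auto. unfold Rminus; rewrite Rplus_opp_r, Rabs_R0; ring. }
      apply H1 in H0.
      assert (m x <= 0). { apply H2. intros r [y [_ ->]]. pose proof (Rabs_pos (x - y)); lra. }
      lra.
Qed.

Theorem proposition2p3 (Es : (R -> Prop) -> Prop)
  (HEs : forall E, Es E -> CL E) :
  (exists G : (R -> R) -> Prop, (forall g, G g -> Cont g) /\ in_K_G G Es)
  <-> hereditary Es.
Proof.
  split.
  - intros [G [HG [F [HF HK]]]] D E CD CE Hsub HE.
    apply HK. apply HK in HE. destruct HE as [_ HE]. split; auto.
    intros f Ff. destruct (HE f Ff) as [g [Gg Hg]]. exists g; split; auto.
  - intros Hh.
    exists (fun g => Cont g /\ forall E, CL E -> (forall x, E x -> g x = 0) -> Es E).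
    split. { intros g [Hg _]; exact Hg. }
    exists (fun f => f = fun _ => 0). split.
    { intros f ->. intros x. apply continuity_const. intros a b; reflexivity. }
    intros E. split.
    + intros HE. split; [apply HEs; auto|].
      intros f ->. destruct (zero_set_exists E (HEs E HE)) as [g [Cg Hg]].
      exists g. split.
      * split; [exact Cg|]. intros E' CE' HE'.
        apply (Hh E' E CE' (HEs E HE)); auto.
        intros x Hx. apply Hg. auto.
      * intros x Ex. symmetry. apply Hg. auto.
    + intros [CE HE]. destruct (HE (fun _ => 0) eq_refl) as [g [[_ Gg] Hg]].
      apply (Gg E CE). intros x Ex. rewrite <- Hg; auto.
Qed.
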